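(* Let $k \ge 2$, $\rho \ge 1$ and $v$ be integers (for which $\beta(\rho,v,k)$ is defined). Then \[ \beta(\rho,v,k) \le \rho\left( \frac{k^2(\rho-1)}{2} + 1 + \max\left\{ k(k-1), \left\lfloor \frac{v-k\rho}{k-1} \right\rfloor \right\} \right). \]
   Context: For integers $v \ge k \ge 2$, a $(v,k)$-packing is a pair $(X,\mathcal{B})$ where $X$ is a set of $v$ points and $\mathcal{B}$ is a set of $k$-subsets of $X$ (blocks) such that every pair of distinct points lies in at most one block. A partial parallel class (PPC) is a set of pairwise disjoint blocks; its size is the number of blocks. A PPC of size $\rho$ is maximum if the packing has no PPC of size $\rho+1$. $\beta(\rho,v,k)$ denotes the maximum number of blocks in a $(v,k)$-packing in which the maximum PPC has size $\rho$. *)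

(* Defs.v *)
From mathcomp Require Import all_boot all_order all_algebra.
Set Implicit Arguments. Unset Strict Implicit. Unset Printing Implicit Defensive.

Definition is_packing (v k : nat) (B : {set {set 'I_v}}) : Prop :=
  (forall b, b \in B -> #|b| = k) /\
  (forall x y : 'I_v, x != y -> #|[set b in B | (x \in b) && (y \in b)]| <= 1)%N.

Definition is_PPC (v : nat) (B P : {set {set 'I_v}}) : Prop :=
  P \subset B /\
  (forall b1 b2, b1 \in P -> b2 \in P -> b1 != b2 -> [disjoint b1 & b2]).

Definition max_PPC_size (v : nat) (B : {set {set 'I_v}}) (rho : nat) : Prop :=
  (exists P, is_PPC B P /\ #|P| = rho) /\
  ~ (exists P, is_PPC B P /\ #|P| = rho.+1).

Definition is_beta (rho v k b : nat) : Prop :=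
  (exists B : {set {set 'I_v}}, is_packing k B /\ max_PPC_size B rho /\ #|B| = b) /\
  (forall B : {set {set 'I_v}}, is_packing k B -> max_PPC_size B rho -> (#|B| <= b)%N).

(* Main.v *)
Require Import Defs.
From mathcomp Require Import all_boot all_order all_algebra.
From mathcomp Require Import zify ring lra.
Import Order.TTheory GRing.Theory Num.Theory.
Set Implicit Arguments. Unset Strict Implicit.

Lemma card_bigcup_le (I T : finType) (J : {pred I}) (F : I -> {set T}) :
  #|\bigcup_(i in J) F i| <= \sum_(i in J) #|F i|.
Proof.
elim/big_rec2: _ => [|i n U _ le]; first by rewrite cards0.
by rewrite (leq_trans (leq_card_setU _ _).1) ?leq_add2l.
Qed.

Section Main.
Variables (v k rho : nat) (B P : {set {set 'I_v}}).
Hypothesis Hk : 2 <= k.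
Hypothesis Hsz : forall b, b \in B -> #|b| = k.
Hypothesis Hlin : forall x y : 'I_v, x != y ->
  #|[set b in B | (x \in b) && (y \in b)]| <= 1.
Hypothesis HPB : P \subset B.
Hypothesis HPd : forall b1 b2, b1 \in P -> b2 \in P -> b1 != b2 -> [disjoint b1 & b2].
Hypothesis HPc : #|P| = rho.
Hypothesis Hmax : ~ (exists P', is_PPC B P' /\ #|P'| = rho.+1).

Lemma lin2 b1 b2 x y : b1 \in B -> b2 \in B -> x != y -> x \in b1 -> y \in b1 ->
  x \in b2 -> y \in b2 -> b1 = b2.
Proof.
move=> B1 B2 xy x1 y1 x2 y2.
have /card_le1_eqP := Hlin xy; apply; by rewrite inE ?B1 ?B2 ?x1 ?y1 ?x2 ?y2.
Qed.

Lemma meet_le1 b1 b2 : b1 \in B -> b2 \in B -> b1 != b2 -> #|b1 :&: b2| <= 1.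
Proof.
move=> B1 B2 ne; rewrite leqNgt; apply/negP => /card_gt1P [x [y [/setIP[x1 x2] /setIP[y1 y2] xy]]].
by move/eqP: ne; apply; exact: (@lin2 b1 b2 x y B1 B2 xy x1 y1 x2 y2).
Qed.

Definition meets (b q : {set 'I_v}) := ~~ [disjoint b & q].
Definition T b := [set q in P | meets b q].

Lemma F2 b : b \in B -> b \notin P -> exists2 q, q \in P & meets b q.
Proof.
move=> bB bP; case: (boolP [exists q in P, meets b q]) => [/existsP[q /andP[]]|H].
  by exists q.
exfalso; apply: Hmax; exists (b |: P); split; last by rewrite cardsU1 bP HPc.
have dis q : q \in P -> [disjoint b & q].
  move=> qP; move: H; rewrite negb_exists => /forallP /(_ q).
  by rewrite qP /meets negbK.
split; first by rewrite subUset sub1set bB HPB.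
move=> b1 b2 /setU1P[->|h1] /setU1P[->|h2] ne.
- by rewrite eqxx in ne.
- exact: dis.
- by rewrite disjoint_sym; apply: dis.
- exact: HPd.
Qed.

Definition Att q := [set a in B | (a \notin P) && (T a == [set q])].
Definition Multi := [set b in B | 1 < #|T b|].

Lemma decomp : #|B| <= #|P| + #|Multi| + \sum_(q in P) #|Att q|.
Proof.
have sub : B \subset P :|: Multi :|: \bigcup_(q in P) Att q.
  apply/subsetP => b bB; case: (boolP (b \in P)) => bP.
    by apply/setUP; left; apply/setUP; left.
  have [q qP mq] := F2 bB bP.
  case: (ltnP 1 #|T b|) => h.
    by apply/setUP; left; apply/setUP; right; rewrite inE bB h.
  apply/setUP; right; apply/bigcupP; exists q => //.
  by rewrite inE bB bP /= eq_sym eqEcard sub1set cards1 inE qP mq h.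
apply: leq_trans (subset_leq_card sub) _.
apply: leq_trans (leq_card_setU _ _).1 _; rewrite leq_add //; last exact: card_bigcup_le.
exact: (leq_card_setU _ _).1.
Qed.

Lemma att_disj q a q' : a \in Att q -> q' \in P -> q' != q -> [disjoint a & q'].
Proof.
rewrite inE => /and3P[_ _ /eqP Ta] q'P ne.
case: (boolP [disjoint a & q']) => // m.
have : q' \in T a by rewrite inE q'P.
by rewrite Ta inE (negbTE ne).
Qed.

Lemma att_meets q a : a \in Att q -> meets a q.
Proof.
rewrite inE => /and3P[_ _ /eqP Ta].
have : q \in T a by rewrite Ta inE.
by rewrite inE => /andP[].
Qed.

Lemma att_B q a : a \in Att q -> a \in B.
Proof. by rewrite inE => /andP[]. Qed.

Lemma att_nP q a : a \in Att q -> a \notin P.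
Proof. by rewrite inE => /and3P[]. Qed.

Lemma att_inter q a1 a2 : q \in P -> a1 \in Att q -> a2 \in Att q -> a1 != a2 ->
  meets a1 a2.
Proof.
move=> qP A1 A2 ne; apply/negP => dis; apply: Hmax.
exists (a1 |: (a2 |: (P :\ q))); split; last first.
  have := cardsD1 q P; rewrite qP HPc.
  have n2 : a2 \notin P :\ q by rewrite !inE (negbTE (att_nP A2)) andbF.
  have n1 : a1 \notin a2 |: (P :\ q).
    by rewrite !inE (negbTE ne) (negbTE (att_nP A1)) andbF.
  rewrite cardsU1 cardsU1 n1 n2 /=; move=> ->; lia.
have dq a b : a \in Att q -> b \in P :\ q -> [disjoint a & b].
  move=> Aa; rewrite !inE => /andP[bq bP]; exact: (att_disj Aa).
split.
  rewrite !subUset !sub1set (att_B A1) (att_B A2) /=.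
  by apply: subset_trans HPB; apply: subsetDl.
move=> b1 b2 /setU1P[->|h1] /setU1P[->|h2] ne'.
- by rewrite eqxx in ne'.
- case/setU1P: h2 => [->|h2]; [exact: dis | exact: dq].
- rewrite disjoint_sym; case/setU1P: h1 => [->|h1]; [exact: dis | exact: dq].
- move: ne'; case/setU1P: h1 => [->|h1]; case/setU1P: h2 => [->|h2] => ne'.
  + by rewrite eqxx in ne'.
  + exact: dq.
  + by rewrite disjoint_sym; exact: dq.
  + move: h1 h2; rewrite !inE => /andP[_ h1] /andP[_ h2]; exact: HPd.
Qed.

Lemma card_sum (A C : {set {set 'I_v}}) : C \subset A -> #|C| = \sum_(x in A) (x \in C).
Proof.
move=> sub; rewrite (big_setID C) /= (setIidPr sub).
rewrite [X in _ + X]big1 ?addn0; last by move=> x /setDP[_ /negbTE ->].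
by rewrite -sum1_card; apply: eq_bigr => x ->.
Qed.

Lemma cardU : #|cover P| = k * rho.
Proof.
have tP : trivIset P by apply/trivIsetP => A1 A2 h1 h2; exact: HPd.
move/eqP: tP <-.
rewrite (eq_bigr (fun _ => k)); first by rewrite sum_nat_const HPc mulnC.
move=> A AP; apply: Hsz; exact: (subsetP HPB).
Qed.

Lemma v_ge : k * rho <= v.
Proof. rewrite -cardU; apply: leq_trans (max_card _) _; by rewrite card_ord. Qed.

Lemma att_bound q : q \in P -> #|Att q| <= maxn (k*(k-1)) ((v - k*rho) %/ (k-1)).
Proof.
move=> qP.
have qB : q \in B := subsetP HPB q qP.
case: (boolP [exists x in q, [forall a in Att q, x \in a]]).
- case/existsP => x /andP[xq /forallP allx].
  have xa a : a \in Att q -> x \in a by move=> Aa; have := allx a; rewrite Aa.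
  set U := cover P.
  have xU : x \in U by apply/bigcupP; exists q.
  have key a1 a2 z : a1 \in Att q -> a2 \in Att q -> z \in a1 -> z \in a2 ->
      z \notin U -> a1 = a2.
    move=> A1 A2 z1 z2 zU.
    apply: (@lin2 a1 a2 x z (att_B A1) (att_B A2)) => //; [|exact: xa|exact: xa].
    by apply: contraNneq zU => <-.
  have aU a : a \in Att q -> k - 1 <= #|a :\: U|.
    move=> Aa; have := cardsID U a; rewrite (Hsz (att_B Aa)).
    have : #|a :&: U| <= 1.
      apply: leq_trans (meet_le1 (att_B Aa) qB _); last first.
        by apply: contraNneq (att_nP Aa) => ->.
      apply: subset_leq_card; apply/subsetP => z /setIP[za /bigcupP[q' q'P zq']].
      rewrite inE za /=; case: (eqVneq q' q) => [<- //|ne].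
      have := att_disj Aa q'P ne; rewrite -setI_eq0 => /eqP/setP/(_ z).
      by rewrite !inE za zq'.
    lia.
  set Q := [set a :\: U | a in Att q].
  have injU : {in Att q &, injective (fun a => a :\: U)}.
    move=> a1 a2 A1 A2 e.
    have : 0 < #|a1 :\: U| by apply: leq_trans (aU _ A1); lia.
    case/card_gt0P => z z1; have z2 : z \in a2 :\: U by rewrite -e.
    move: z1 z2 => /setDP[z1 zU] /setDP[z2 _]; exact: key A1 A2 z1 z2 zU.
  have tQ : trivIset Q.
    apply/trivIsetP => A1 A2 /imsetP[a1 A1' ->] /imsetP[a2 A2' ->] ne.
    rewrite -setI_eq0; apply/eqP/setP => z; rewrite in_set0.
    apply/negP => /setIP[/setDP[z1 zU] /setDP[z2 _]].
    by move/eqP: ne; apply; rewrite (key _ _ _ A1' A2' z1 z2 zU).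
  have cQ : #|cover Q| <= v - k * rho.
    have : cover Q \subset ~: U.
      apply/subsetP => z /bigcupP[A /imsetP[a _ ->] /setDP[_ zU]]; by rewrite inE.
    move/subset_leq_card; have := cardsC U; rewrite card_ord cardU; lia.
  have sQ : #|Att q| * (k - 1) <= \sum_(A in Q) #|A|.
    rewrite -(card_in_imset injU) -sum_nat_const; apply: leq_sum => A /imsetP[a Aa ->].
    exact: aU.
  move/eqP: tQ => tQ.
  apply: leq_trans (leq_maxr _ _) ; rewrite leq_divRL; last lia.
  by move: sQ cQ; rewrite tQ; lia.
- move=> H.
  have H' y : y \in q -> exists2 c, c \in Att q & y \notin c.
    move=> yq; move: H; rewrite negb_exists => /forallP/(_ y); rewrite yq /= negb_forall.
    by case/existsP => c; rewrite negb_imply => /andP[Ac yc]; exists c.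
  apply: leq_trans (leq_maxl _ _).
  have sub : Att q \subset \bigcup_(y in q) [set a in Att q | y \in a].
    apply/subsetP => a Aa; have := att_meets Aa.
    rewrite /meets -setI_eq0 => /set0Pn[y /setIP[ya yq]].
    by apply/bigcupP; exists y => //; rewrite inE Aa ya.
  apply: leq_trans (subset_leq_card sub) _; apply: leq_trans (card_bigcup_le _ _) _.
  rewrite -(Hsz qB) -sum_nat_const; apply: leq_sum => y yq.
  have [c Ac yc] := H' y yq.
  pose z a := odflt y [pick w in a :&: c].
  have zP a : a \in Att q -> y \in a -> z a \in a :&: c.
    move=> Aa ya; rewrite /z; case: pickP => [w //|none] /=.
    have : meets a c by apply: (att_inter qP Aa Ac); apply: contraNneq yc => <-.
    rewrite /meets -setI_eq0 => /set0Pn[w wac]; by have := none w; rewrite wac.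
  have inj : {in [set a in Att q | y \in a] &, injective z}.
    move=> a1 a2 /setIdP[A1 y1] /setIdP[A2 y2] e.
    have /setIP[w1 wc] := zP a1 A1 y1; have /setIP[w2 _] := zP a2 A2 y2.
    rewrite -e in w2.
    apply: (@lin2 a1 a2 y (z a1) (att_B A1) (att_B A2)) => //.
    by apply: contraNneq yc => ->.
  have sub2 : z @: [set a in Att q | y \in a] \subset c :\: q.
    apply/subsetP => w /imsetP[a /setIdP[Aa ya] ->].
    have /setIP[wa wc] := zP a Aa ya; rewrite inE wc andbT; apply/negP => wq.
    have aq : a = q.
      apply: (@lin2 a q y (z a) (att_B Aa) qB) => //.
      by apply: contraNneq yc => ->.
    by move: (att_nP Aa); rewrite aq qP.
  rewrite -(card_in_imset inj); apply: leq_trans (subset_leq_card sub2) _.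
  have := cardsID q c; rewrite (Hsz (att_B Ac)).
  have : 0 < #|c :&: q| by rewrite card_gt0 setI_eq0; exact: att_meets Ac.
  have := Hsz qB; lia.
Qed.

Lemma meet_bound q1 q2 : q1 \in P -> q2 \in P -> q1 != q2 ->
  #|[set b in B | meets b q1 && meets b q2]| <= k * k.
Proof.
move=> P1 P2 ne.
have B1 := subsetP HPB q1 P1; have B2 := subsetP HPB q2 P2.
have [x0 _] : exists x0 : 'I_v, x0 \in q1 by apply/card_gt0P; rewrite (Hsz B1); lia.
pose g b := (odflt x0 [pick x in b :&: q1], odflt x0 [pick x in b :&: q2]).
have gP b q : meets b q -> odflt x0 [pick x in b :&: q] \in b :&: q.
  rewrite /meets -setI_eq0 => /set0Pn[w wbq]; case: pickP => [x //|none].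
  by have := none w; rewrite wbq.
have inj : {in [set b in B | meets b q1 && meets b q2] &, injective g}.
  move=> b b' /setIdP[bB /andP[m1 m2]] /setIdP[bB' /andP[m1' m2']] [e1 e2].
  have /setIP[x1 xq1] := gP _ _ m1; have /setIP[y1 yq2] := gP _ _ m2.
  have /setIP[x1' _] := gP _ _ m1'; have /setIP[y1' _] := gP _ _ m2'.
  rewrite -e1 in x1'; rewrite -e2 in y1'.
  apply: (lin2 bB bB' _ x1 y1 x1' y1').
  apply/negP => /eqP exy; have := HPd P1 P2 ne; rewrite -setI_eq0.
  move=> /eqP/setP/(_ (odflt x0 [pick x in b :&: q1])); rewrite !inE xq1 exy yq2.
  done.
rewrite -(card_in_imset inj).
apply: leq_trans (subset_leq_card (_ : _ \subset setX q1 q2)) _; last first.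
  by rewrite cardsX (Hsz B1) (Hsz B2).
apply/subsetP => w /imsetP[b /setIdP[bB /andP[m1 m2]] ->].
apply/setXP; split.
  by have /setIP[_ ->] := gP _ _ m1.
by have /setIP[_ ->] := gP _ _ m2.
Qed.

Lemma multi_bound : 2 * #|Multi| <= rho * ((rho - 1) * (k * k)).
Proof.
pose F b q1 q2 := nat_of_bool (meets b q1 && meets b q2).
have step1 b : b \in Multi -> 2 <= \sum_(q1 in P) \sum_(q2 in P :\ q1) F b q1 q2.
  rewrite inE => /andP[bB /card_gt1P[q1 [q2 [h1 h2 ne]]]].
  move: h1 h2; rewrite !inE => /andP[P1 m1] /andP[P2 m2].
  have s1 : 1 <= \sum_(q' in P :\ q1) F b q1 q'.
    have c2 : q2 \in P :\ q1 by rewrite !inE eq_sym ne P2.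
    rewrite (bigD1 q2 c2) /=.
    by rewrite /F m1 m2 /=; exact: leq_addr.
  have s2 : 1 <= \sum_(q' in P :\ q2) F b q2 q'.
    have c1 : q1 \in P :\ q2 by rewrite !inE ne P1.
    rewrite (bigD1 q1 c1) /=.
    by rewrite /F m1 m2 /=; exact: leq_addr.
  have c3 : (q2 \in P) && (q2 != q1) by rewrite eq_sym ne P2.
  rewrite (bigD1 q1) //= (bigD1 q2 c3) /=.
  by rewrite addnA; apply: leq_trans (leq_addr _ _); exact: (leq_add s1 s2).
have step2 : \sum_(b in B) ((b \in Multi) + (b \in Multi)) <=
    \sum_(b in B) \sum_(q1 in P) \sum_(q2 in P :\ q1) F b q1 q2.
  apply: leq_sum => b bB; case: (boolP (b \in Multi)) => h //.
  by have := step1 b h.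
have step3 : \sum_(b in B) \sum_(q1 in P) \sum_(q2 in P :\ q1) F b q1 q2
    <= rho * ((rho - 1) * (k * k)).
  rewrite exchange_big /= -HPc -sum_nat_const; apply: leq_sum => q1 P1.
  rewrite exchange_big /=.
  have cD : #|P :\ q1| = #|P| - 1 by have := cardsD1 q1 P; rewrite P1 /= => ->; rewrite addKn.
  rewrite -cD -sum_nat_const; apply: leq_sum => q2; rewrite !inE => /andP[ne P2].
  rewrite (eq_bigr (fun b => nat_of_bool (b \in [set b in B | meets b q1 && meets b q2]))); last first.
    by move=> b bB; rewrite inE bB.
  rewrite -card_sum; last by apply/subsetP => b /setIdP[].
  by apply: meet_bound; rewrite // eq_sym.
rewrite (@card_sum B); last by apply/subsetP => b /setIdP[].
rewrite mul2n -addnn -big_split /=.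
exact: leq_trans step2 step3.
Qed.

Lemma main_nat : 2 * #|B| <= 2 * rho + rho * ((rho - 1) * (k * k)) +
  2 * (rho * maxn (k*(k-1)) ((v - k*rho) %/ (k-1))).
Proof.
have d := decomp; have m := multi_bound.
set M := maxn _ _.
have s : \sum_(q in P) #|Att q| <= rho * M.
  apply: leq_trans (_ : _ <= \sum_(q in P) M) _; last by rewrite sum_nat_const HPc.
  by apply: leq_sum => q qP; exact: att_bound.
rewrite HPc in d.
set X := rho * ((rho - 1) * (k * k)) in m *.
set Y := rho * M in s *.
lia.
Qed.

End Main.

Lemma maxZ (a b : nat) : (Num.max (a%:Z) (b%:Z) = (maxn a b)%:Z)%R.
Proof.
case: (leqP a b) => h.
  by rewrite max_r ?lez_nat // (maxn_idPr h).
by rewrite max_l ?lez_nat ?(ltnW h) // (maxn_idPl (ltnW h)).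
Qed.

Theorem theorem5p4 (k rho v b : nat) :
  (2 <= k)%N -> (1 <= rho)%N -> is_beta rho v k b ->
  (b%:Q <= rho%:Q * ((k ^ 2 * (rho - 1))%N%:Q / 2%:Q + 1
       + (Num.max ((k * (k - 1))%N%:Z)
                  ((v%:Z - (k * rho)%N%:Z) %/ (k - 1)%N%:Z)%Z)%:~R))%R.
Proof.
move=> Hk Hr [[B0 [[Hsz Hlin] [[[P [[HPB HPd] HPc]] Hmax] Hb]]] _].
have H := main_nat Hk Hsz Hlin HPB HPd HPc Hmax.
have vge := v_ge Hsz HPB HPd HPc.
rewrite (subzn vge) divz_nat maxZ.
set M := maxn _ _ in H *.
rewrite Hb in H.
have HQ : ((2 * b)%N%:R <= (2 * rho + rho * ((rho - 1) * (k * k)) + 2 * (rho * M))%N%:R :> rat)%R.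
  by rewrite ler_nat.
have e1 : (k ^ 2 * (rho - 1))%N = ((rho - 1) * (k * k))%N by rewrite mulnC mulnn.
rewrite e1.
change (((Posz b)%:~R))%R with ((b%:R : rat))%R.
change (((Posz rho)%:~R))%R with ((rho%:R : rat))%R.
change (((Posz ((rho - 1) * (k * k))%N)%:~R))%R with ((((rho - 1) * (k * k))%N%:R : rat))%R.
change (((Posz M)%:~R))%R with ((M%:R : rat))%R.
change (((Posz 2)%:~R))%R with ((2%:R : rat))%R.
move: HQ; rewrite !natrD !natrM.
set X := (((rho - 1) * (k * k))%N%:R : rat).
move=> HQ.
nra.
Qed.
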